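(* Let $k$ be a positive integer and $T$ a tree that is not a path, such that $T$ has no vertex of degree two and no major vertex of terminal degree zero. Then: $O_{R,k}(T)=\mathcal{B}$ if $|M_4(T)|\ge1$ or $|M_3(T)|\ge2$ (for all $k\ge1$), or if $M_4(T)=\emptyset$, $|M_3(T)|=1$, $|M_2(T)|\ge2$ and $k=1$, or if $M_4(T)=M_3(T)=\emptyset$, $|M_2(T)|\ge4$ and $k=1$; $O_{R,k}(T)=\mathcal{N}$ if $M_4(T)=\emptyset$, $|M_3(T)|=1$, $|M_2(T)|\in\{0,1\}$ and $k=1$, or if $M_4(T)=\emptyset$ and $|M_3(T)|=1$ and $k\ge2$, or if $M_4(T)=M_3(T)=\emptyset$, $|M_2(T)|=3$ and $k=1$; $O_{R,k}(T)=\mathcal{M}$ if $M_4(T)=M_3(T)=\emptyset$, $|M_2(T)|=2$ and $k=1$, or if $M_4(T)=M_3(T)=\emptyset$, $M_2(T)\ne\emptyset$ and $k\ge2$.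
   Context: A major vertex is a vertex of degree at least $3$; a leaf has degree $1$. In a tree $T$, a leaf $\ell$ is a terminal vertex of a major vertex $v$ if $d(\ell,v)<d(\ell,w)$ for every other major vertex $w$. The terminal degree $ter_T(v)$ of a major vertex $v$ is its number of terminal vertices; an exterior major vertex is a major vertex of positive terminal degree. $M(T)$ is the set of exterior major vertices; $M_i(T)=\{w\in M(T):ter_T(w)=i\}$ for $i=1,2,3$, and $M_4(T)=\{w\in M(T):ter_T(w)\ge4\}$. $d$ is the shortest-path distance and $d_k(x,y)=\min\{d(x,y),k+1\}$; a set $S$ is a distance-$k$ resolving set if for all distinct $x,y$ some $z\in S$ has $d_k(x,z)\ne d_k(y,z)$. In the Maker-Breaker distance-$k$ resolving game, Maker and Breaker alternately select a not-yet-chosen vertex; Maker wins if his selected vertices form a distance-$k$ resolving set, Breaker wins otherwise. $O_{R,k}(T)=\mathcal{M}$ if Maker has a winning strategy whether he moves first or second, $\mathcal{B}$ if Breaker has a winning strategy whether she moves first or second, $\mathcal{N}$ if the first player has a winning strategy. *)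

(* Defs.v *)
(* finite simple graphs as symmetric irreflexive relations on a finType. *)
From mathcomp Require Import all_boot.
Set Implicit Arguments. Unset Strict Implicit. Unset Printing Implicit Defensive.

Section Graphs.
Variables (T : finType) (e : rel T).

Definition deg (v : T) : nat := #|[set w | e v w]|.

Definition is_tree : Prop :=
  (forall x y : T, connect e x y) /\
  (forall c : seq T, uniq c -> 2 < size c -> ~~ cycle e c).

Definition is_path_graph : Prop :=
  exists s : seq T, perm_eq s (enum T) /\
    forall x y, e x y = ((x, y) \in zip s (behead s)) || ((y, x) \in zip s (behead s)).

Fixpoint reach (n : nat) (x : T) : {set T} :=
  match n with
  | 0 => [set x]
  | n'.+1 => reach n' x :|: [set y | [exists z in reach n' x, e z y]]
  end.

(* shortest-path distance (graph assumed connected) *)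
Definition dist (x y : T) : nat := find (fun n => y \in reach n x) (iota 0 #|T|).

Definition dist_k (k : nat) (x y : T) : nat := minn (dist x y) k.+1.

Definition major (v : T) : bool := 3 <= deg v.
Definition leaf (v : T) : bool := deg v == 1.

Definition terminal_of (l v : T) : bool :=
  [&& leaf l, major v & [forall w, (major w && (w != v)) ==> (dist l v < dist l w)]].

Definition ter (v : T) : nat := #|[set l | terminal_of l v]|.

Definition exterior_major (v : T) : bool := major v && (0 < ter v).

Definition Mset (i : nat) : {set T} :=
  [set w | exterior_major w && (if i == 4 then 4 <= ter w else ter w == i)].

Definition resolving_k (k : nat) (S : {set T}) : bool :=
  [forall x, forall y, (x != y) ==> [exists z in S, dist_k k x z != dist_k k y z]].

(* Maker-Breaker game: M = Maker's vertices, B = Breaker's vertices;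
   mturn = true when Maker is to move.
   Fuel n bounds the number of remaining moves (#|T| suffices). *)
Fixpoint maker_wins (k n : nat) (M B : {set T}) (mturn : bool) : bool :=
  match n with
  | 0 => resolving_k k M
  | n'.+1 =>
      if ~: (M :|: B) == set0 then resolving_k k M else
      if mturn then [exists v in ~: (M :|: B), maker_wins k n' (v |: M) B false]
      else [forall v in ~: (M :|: B), maker_wins k n' M (v |: B) true]
  end.

Definition maker_wins_first (k : nat) : bool := maker_wins k #|T| set0 set0 true.
Definition maker_wins_second (k : nat) : bool := maker_wins k #|T| set0 set0 false.

End Graphs.

Inductive outcome := OutM | OutB | OutN | OutP.

(* O_{R,k}: M if Maker wins moving first and second; B if Breaker wins moving
   first and second; N if the first player wins; P (previous player) otherwise *)
Definition O_Rk (T : finType) (e : rel T) (k : nat) : outcome :=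
  let m1 := maker_wins_first e k in
  let m2 := maker_wins_second e k in
  if m1 && m2 then OutM
  else if ~~ m1 && ~~ m2 then OutB
  else if m1 then OutN else OutP.

(* Main.v *)
Require Import Defs.
From mathcomp Require Import all_boot zify.
Set Implicit Arguments. Unset Strict Implicit. Unset Printing Implicit Defensive.


Section Basics.
Variables (T : finType) (e : rel T).

Lemma reach_self n x : x \in reach e n x.
Proof. elim: n => [|n IH] /=; first by rewrite inE. by rewrite inE IH. Qed.

Lemma reach_mono m n x : m <= n -> reach e m x \subset reach e n x.
Proof.
elim: n => [|n IH]; first by rewrite leqn0 => /eqP ->.
rewrite leq_eqVlt ltnS => /orP[/eqP ->//|/IH h].
exact: subset_trans h (subsetUl _ _).
Qed.

Lemma reach1 x : reach e 1 x = x |: [set y | e x y].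
Proof.
apply/setP=> y; rewrite /= !inE; congr (_ || _).
apply/existsP/idP => [[z /andP[]]|]; first by rewrite inE => /eqP ->.
by move=> h; exists x; rewrite inE eqxx.
Qed.

Lemma dist_le m x z : m < #|T| -> (dist e x z <= m) = (z \in reach e m x).
Proof.
move=> hm; rewrite /dist.
set p := (fun n => z \in reach e n x).
apply/idP/idP => [h|h].
- have hs : find p (iota 0 #|T|) < size (iota 0 #|T|) by rewrite size_iota; lia.
  rewrite -has_find in hs.
  have := nth_find 0 hs; rewrite /p nth_iota; last by move: hs; rewrite has_find size_iota.
  rewrite add0n => hz; exact: (subsetP (reach_mono x h)).
- rewrite leqNgt; apply/negP => hlt.
  have := before_find 0 hlt; rewrite nth_iota // add0n /p h //.
Qed.

Lemma dist_self x : dist e x x = 0.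
Proof.
have h0 : 0 < #|T| by apply/card_gt0P; exists x.
apply/eqP; rewrite -leqn0 dist_le // inE //.
Qed.

Lemma dist_gt0 x z : x != z -> 0 < dist e x z.
Proof.
move=> hxz; have h0 : 0 < #|T| by apply/card_gt0P; exists x.
rewrite lt0n -leqn0 dist_le // inE eq_sym; exact: hxz.
Qed.

End Basics.


Section Leaf.
Variables (T : finType) (e : rel T).
Hypothesis Hsym : symmetric e.
Hypothesis Hirr : irreflexive e.

Lemma leaf_major x : leaf e x -> major e x = false.
Proof. by rewrite /leaf /major => /eqP ->. Qed.

Lemma leaf_nbr a v : leaf e a -> e v a -> forall y, e a y = (y == v).
Proof.
rewrite /leaf /deg => /cards1P [u hu] hva y.
have : v \in [set w | e a w] by rewrite inE Hsym.
rewrite hu inE => /eqP ->.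
by rewrite -in_set1 -hu inE.
Qed.

Lemma leaf_uniq a v w : leaf e a -> e v a -> e w a -> v = w.
Proof.
move=> hl hv hw; have := leaf_nbr hl hv w; rewrite Hsym hw => /esym /eqP //.
Qed.

Lemma leaf_reach a v n : leaf e a -> e v a -> reach e n.+1 a = a |: reach e n v.
Proof.
move=> hl hv; elim: n => [|n IH].
  rewrite reach1; apply/setP => y; rewrite !inE (leaf_nbr hl hv). by [].
rewrite -[reach e n.+2 a]/(reach e n.+1 a :|: [set y | [exists z in reach e n.+1 a, e z y]]) IH.
rewrite -[reach e n.+1 v]/(reach e n v :|: [set y | [exists z in reach e n v, e z y]]).
apply/setP => y; rewrite !inE -orbA.
have hvn : v \in reach e n v by exact: reach_self.
case: (y =P a) => //= _.
case hyv: (y \in reach e n v) => //=.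
apply/existsP/existsP => [[z /andP[]]|[z /andP[hz hzy]]].
  rewrite !inE => /orP[/eqP->|hz] hzy.
    rewrite (leaf_nbr hl hv) in hzy; move/eqP: hzy => hy.
    by rewrite hy hvn in hyv.
  by exists z; rewrite hz.
by exists z; rewrite !inE hz orbT.
Qed.

Lemma twin_dist a b v z : leaf e a -> leaf e b -> e v a -> e v b ->
  z != a -> z != b -> dist e a z = dist e b z.
Proof.
move=> ha hb hva hvb hza hzb; rewrite /dist; apply: eq_find => -[|n].
  by rewrite /= !inE (negbTE hza) (negbTE hzb).
by rewrite (leaf_reach n ha hva) (leaf_reach n hb hvb) !inE (negbTE hza) (negbTE hzb).
Qed.

End Leaf.


Section Game.
Variables (T : finType) (e : rel T) (k : nat).

Definition dj (M B : {set T}) := forall x, x \in M -> x \notin B.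

Lemma free_addM v (M B : {set T}) : v \in ~: (M :|: B) ->
  #|~: ((v |: M) :|: B)| < #|~: (M :|: B)|.
Proof.
move=> hv; rewrite (cardsD1 v (~: (M :|: B))) hv add1n ltnS.
apply: subset_leq_card; apply/subsetP => x; rewrite !inE.
case: (x =P v) => //= ->; by move: hv; rewrite !inE => ->.
Qed.

Lemma free_addB v (M B : {set T}) : v \in ~: (M :|: B) ->
  #|~: (M :|: (v |: B))| < #|~: (M :|: B)|.
Proof.
move=> hv; rewrite (cardsD1 v (~: (M :|: B))) hv add1n ltnS.
apply: subset_leq_card; apply/subsetP => x; rewrite !inE.
case: (x =P v) => /= [->|_]; first by rewrite orbT.
by [].
Qed.

Lemma dj_addM v M B : dj M B -> v \in ~: (M :|: B) -> dj (v |: M) B.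
Proof.
move=> h hv x; rewrite !inE => /orP[/eqP->|/h //].
by move: hv; rewrite !inE negb_or => /andP[].
Qed.

Lemma dj_addB v M B : dj M B -> v \in ~: (M :|: B) -> dj M (v |: B).
Proof.
move=> h hv x hx; rewrite !inE negb_or (h x hx) andbT.
apply/eqP => ?; subst; move: hv; by rewrite !inE hx.
Qed.

Lemma game_maker (Inv : {set T} -> {set T} -> bool -> Prop) :
  (forall M B t, dj M B -> Inv M B t -> ~: (M :|: B) = set0 -> resolving_k e k M) ->
  (forall M B, dj M B -> Inv M B true -> ~: (M :|: B) != set0 ->
      exists2 v, v \in ~: (M :|: B) & Inv (v |: M) B false) ->
  (forall M B, dj M B -> Inv M B false -> forall v, v \in ~: (M :|: B) -> Inv M (v |: B) true) ->
  forall n M B t, dj M B -> Inv M B t -> #|~: (M :|: B)| <= n -> maker_wins e k n M B t.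
Proof.
move=> hend hM hB; elim=> [|n IH] M B t hdj hI hn /=.
  apply: (hend M B t) => //; apply/eqP; rewrite -cards_eq0; lia.
case: eqP => [h0|/eqP h0]; first exact: (hend M B t).
case: t hI => hI.
  have [v hv hI'] := hM M B hdj hI h0.
  apply/existsP; exists v; rewrite hv /=; apply: IH; first exact: dj_addM.
    exact: hI'.
  have := free_addM hv; lia.
apply/forallP => v; apply/implyP => hv; apply: IH; first exact: dj_addB.
  exact: hB.
have := free_addB hv; lia.
Qed.

Lemma game_breaker (Inv : {set T} -> {set T} -> bool -> Prop) :
  (forall M B t, dj M B -> Inv M B t -> ~: (M :|: B) = set0 -> ~~ resolving_k e k M) ->
  (forall M B, dj M B -> Inv M B true -> forall v, v \in ~: (M :|: B) -> Inv (v |: M) B false) ->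
  (forall M B, dj M B -> Inv M B false -> ~: (M :|: B) != set0 ->
      exists2 v, v \in ~: (M :|: B) & Inv M (v |: B) true) ->
  forall n M B t, dj M B -> Inv M B t -> #|~: (M :|: B)| <= n -> ~~ maker_wins e k n M B t.
Proof.
move=> hend hM hB; elim=> [|n IH] M B t hdj hI hn /=.
  apply: (hend M B t) => //; apply/eqP; rewrite -cards_eq0; lia.
case: eqP => [h0|/eqP h0]; first exact: (hend M B t).
case: t hI => hI.
  rewrite negb_exists; apply/forallP => v; case hv: (v \in ~: (M :|: B)) => //=; apply: IH.
  - exact: dj_addM.
  - exact: hM.
  - have := free_addM hv; lia.
have [v hv hI'] := hB M B hdj hI h0.
rewrite negb_forall; apply/existsP; exists v; rewrite hv /=; apply: IH.
- exact: dj_addB.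
- exact: hI'.
- have := free_addB hv; lia.
Qed.

Lemma free0 : ~: ((set0 : {set T}) :|: set0) = setT.
Proof. by rewrite setU0 setC0. Qed.

End Game.


Section Pairing.
Variables (T : finType) (e : rel T) (k : nat).
Variables (f : T -> T) (M0 : {set T}).
Hypothesis finv : involutive f.
Hypothesis hres : forall S : {set T}, M0 \subset S ->
  (forall x, f x != x -> (x \in S) || (f x \in S)) -> resolving_k e k S.

Definition BTinv (M B : {set T}) := forall x, f x != x -> x \in B -> f x \in M.
Definition PInv (M B : {set T}) (t : bool) :=
  M0 \subset M /\
  (if t then BTinv M B \/ exists x0, [/\ f x0 != x0, x0 \in B, f x0 \in ~: (M :|: B) &
        forall x, f x != x -> x \in B -> f x \in M \/ x = x0]
   else BTinv M B).

Lemma pairing_inv n M B t : dj M B -> PInv M B t -> #|~: (M :|: B)| <= n -> maker_wins e k n M B t.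
Proof.
apply: game_maker.
- move=> M' B' t' hdj [hM0 hI] h0; apply: hres => // x hx.
  have hx' : (x \in M') || (x \in B').
    apply/negPn; move: (in_setT x); rewrite -setC0 -h0 !inE; by rewrite negb_or.
  case/orP: hx' => [->//|hxB].
  have hfin : f x \in M' \/ x \in ~: (M' :|: B') -> False -> f x \in M'.
    by move=> [] //.
  case: t' hI => [[hI|[x0 [h1 h2 h3 h4]]]|hI].
  + by rewrite (hI x hx hxB) orbT.
  + case: (h4 x hx hxB) => [->|->]; first by rewrite orbT.
    by move: h3; rewrite h0 inE.
  + by rewrite (hI x hx hxB) orbT.
- move=> M' B' hdj [hM0 [hI|[x0 [h1 h2 h3 h4]]]] h0.
  + case/set0Pn: h0 => v hv; exists v => //; split.
      exact: subset_trans hM0 (subsetUr _ _).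
    by move=> x hx hxB; rewrite inE (hI x hx hxB) orbT.
  + exists (f x0); first done; split; first exact: subset_trans hM0 (subsetUr _ _).
    move=> x hx hxB; case: (h4 x hx hxB) => [h|->]; by rewrite !inE ?h ?eqxx ?orbT.
- move=> M' B' hdj [hM0 hI] v hv; split => //.
  have hvM : v \notin M' by move: hv; rewrite !inE negb_or => /andP[].
  have hvB : v \notin B' by move: hv; rewrite !inE negb_or => /andP[].
  case hfv: ((f v != v) && (f v \notin M')); last first.
    left => x hx; rewrite !inE => /orP[/eqP hxv|]; last exact: hI.
    by subst x; move: hfv; rewrite hx /= => /negbFE.
  move/andP: hfv => [hfv hfM].
  right; exists v; split => //.
  + by rewrite !inE eqxx.
  + rewrite !inE negb_or hfM /= negb_or (negbTE hfv) /=.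
    apply/negP => hfB.
    have : f (f v) != f v by rewrite finv eq_sym.
    move=> /(hI _) /(_ hfB); rewrite finv => hvM'; by rewrite hvM' in hvM.
  + move=> x hx; rewrite !inE => /orP[/eqP->|hxB]; [by right|left; exact: hI].
Qed.

Lemma pairing_second : M0 = set0 -> maker_wins_second e k.
Proof.
move=> h; apply: pairing_inv.
- by move=> x; rewrite !inE.
- by split; [rewrite h sub0set| move=> x _; rewrite inE].
- by rewrite free0 cardsT.
Qed.

Lemma pairing_first x0 : M0 \subset [set x0] -> maker_wins_first e k.
Proof.
move=> h; rewrite /maker_wins_first.
have : 0 < #|T| by apply/card_gt0P; exists x0.
case hT: #|T| => [|n] // _ /=.
rewrite free0; case: eqP => [h0|_].
  by have := in_setT x0; rewrite h0 inE.
apply/existsP; exists x0; rewrite in_setT /=.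
apply: pairing_inv.
- by move=> x; rewrite !inE.
- split; first by apply: subset_trans h _; rewrite setU0 subxx.
  by move=> x _; rewrite inE.
- by rewrite !setU0 cardsC1 hT.
Qed.

End Pairing.


Section Resolve.
Variables (T : finType) (e : rel T) (k : nat).
Hypothesis Hsym : symmetric e.
Hypothesis Hirr : irreflexive e.
Hypothesis Hlm : forall x, leaf e x || major e x.
Hypothesis Hpar : forall a v, leaf e a -> e v a -> major e v.
Hypothesis hT : 2 < #|T|.
Hypothesis hk : 0 < k.
Variable S : {set T}.

Definition sepS x y := exists2 z, z \in S & dist_k e k x z != dist_k e k y z.

Lemma sepS_sym x y : sepS x y -> sepS y x.
Proof. by case=> z hz h; exists z => //; rewrite eq_sym. Qed.

Lemma sep_reach m x y z : m < #|T| -> m < k.+1 -> z \in S ->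
  z \in reach e m x -> z \notin reach e m y -> sepS x y.
Proof.
move=> hm hmk hz h1 h2; exists z => //.
rewrite -dist_le // in h1; rewrite -dist_le // in h2.
rewrite /dist_k; apply/eqP => h; move: h1 h2 h; lia.
Qed.

Lemma leaf_has_par x : leaf e x -> exists p, e p x.
Proof.
rewrite /leaf /deg => /cards1P [u hu]; exists u.
have : u \in [set w | e x w] by rewrite hu inE.
by rewrite inE Hsym.
Qed.

Lemma H1 x y : x \in S -> x != y -> sepS x y.
Proof.
move=> hx hxy; apply: (@sep_reach 0 x y x) => //; try lia.
- by rewrite /= inE.
- by rewrite /= inE.
Qed.

Lemma H2 x y : major e x -> x != y -> y \notin S ->
  (exists2 a, a \in S & leaf e a && e x a) -> sepS x y.
Proof.
move=> hx hxy hy [a haS /andP[ha hxa]].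
apply: (@sep_reach 1 x y a) => //; try lia.
- by rewrite reach1 !inE hxa orbT.
- rewrite reach1 !inE negb_or; apply/andP; split.
    by apply/eqP => ?; subst a; rewrite haS in hy.
  apply/negP => hya; have := leaf_uniq Hsym ha hxa hya; move=> ?; subst y.
  by rewrite eqxx in hxy.
Qed.

Lemma H3 x y p q : leaf e x -> leaf e y -> e p x -> e q y -> p != q -> p \in S -> sepS x y.
Proof.
move=> hx hy hpx hqy hpq hp.
apply: (@sep_reach 1 x y p) => //; try lia.
- by rewrite reach1 !inE Hsym hpx orbT.
- rewrite reach1 !inE negb_or; apply/andP; split.
    by apply/eqP => hpy; have := Hpar hx hpx; rewrite hpy leaf_major.
  apply/negP => hyp; rewrite Hsym in hyp.
  by rewrite (leaf_uniq Hsym hy hyp hqy) eqxx in hpq.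
Qed.

Lemma H4 x y p q a : leaf e x -> leaf e y -> e p x -> e q y -> p != q ->
  2 <= k -> a \in S -> leaf e a -> e p a -> x \notin S -> y \notin S -> sepS x y.
Proof.
move=> hx hy hpx hqy hpq hk2 haS ha hpa hxS hyS.
apply: (@sep_reach 2 x y a) => //; try lia.
- rewrite (leaf_reach Hsym 1 hx hpx) reach1 !inE hpa !orbT //.
- rewrite (leaf_reach Hsym 1 hy hqy) reach1 !inE !negb_or.
  apply/and3P; split.
  + by apply/eqP => ?; subst a; move: hyS; rewrite haS.
  + by apply/eqP => ?; subst a; have := Hpar hy hqy; rewrite leaf_major.
  + apply/negP => hqa; by rewrite (leaf_uniq Hsym ha hpa hqa) eqxx in hpq.
Qed.

Lemma resolve_Q :
  (forall v, major e v -> v \in S \/ exists2 a, a \in S & leaf e a && e v a) ->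
  (forall v a b, leaf e a -> leaf e b -> e v a -> e v b -> a \notin S -> b \notin S -> a = b) ->
  (2 <= k \/ forall v w a b, v \notin S -> w \notin S -> leaf e a -> e v a -> a \notin S ->
        leaf e b -> e w b -> b \notin S -> v = w) ->
  resolving_k e k S.
Proof.
move=> hrep htw hbad.
have main : forall x y, x != y -> sepS x y.
  move=> x y hxy.
  case hxS: (x \in S); first exact: H1.
  case hyS: (y \in S); first by apply: sepS_sym; apply: H1 => //; rewrite eq_sym.
  case/orP: (Hlm x) => [hxl|hxm]; last first.
    case: (hrep x hxm) => [|]; first by rewrite hxS.
    by move=> h; apply: H2 => //; rewrite hyS.
  case/orP: (Hlm y) => [hyl|hym]; last first.
    case: (hrep y hym) => [|]; first by rewrite hyS.
    by move=> h; apply: sepS_sym; apply: H2 => //; [rewrite eq_sym | rewrite hxS].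
  have [p hpx] := leaf_has_par hxl.
  have [q hqy] := leaf_has_par hyl.
  case: (p =P q) => [hpq|/eqP hpq].
    subst q; by rewrite (htw p x y hxl hyl hpx hqy) ?hxS ?hyS ?eqxx in hxy.
  case hpS: (p \in S); first exact: (H3 hxl hyl hpx hqy hpq).
  case hqS: (q \in S).
    by apply: sepS_sym; apply: (H3 hyl hxl hqy hpx) => //; rewrite eq_sym.
  case: hbad => [hk2|hb].
    case: (hrep p (Hpar hxl hpx)) => [|[a haS /andP[ha hpa]]]; first by rewrite hpS.
    by apply: (H4 hxl hyl hpx hqy hpq hk2 haS ha hpa); rewrite ?hxS ?hyS.
  by rewrite (hb p q x y) ?hpS ?hqS ?hxS ?hyS ?eqxx in hpq.
apply/forallP => x; apply/forallP => y; apply/implyP => hxy.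
by case: (main x y hxy) => z hz hne; apply/existsP; exists z; rewrite hz.
Qed.

End Resolve.


Section Brk.
Variables (T : finType) (e : rel T) (k : nat).
Hypothesis Hsym : symmetric e.
Hypothesis Hirr : irreflexive e.
Hypothesis hT : 2 < #|T|.

Definition L v := [set a | leaf e a && e v a].
Definition Ff (fr : {set T}) v := [&& major e v, v \in fr & 1 < #|L v :&: fr|].
Definition touch x v := (x == v) || (x \in L v).

Lemma L_uniq v w a : a \in L v -> a \in L w -> v = w.
Proof. rewrite /L !inE => /andP[ha hv] /andP[_ hw]; exact: (leaf_uniq Hsym ha hv hw). Qed.

Lemma L_leaf v a : a \in L v -> leaf e a.
Proof. by rewrite /L inE => /andP[]. Qed.

Lemma major_notL v a : major e a -> a \notin L v.
Proof. by move=> h; apply/negP => /L_leaf; rewrite /leaf /major; move: h; rewrite /major => h /eqP hh; rewrite hh in h. Qed.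

Lemma touch_uniq x v w : major e v -> major e w -> touch x v -> touch x w -> v = w.
Proof.
move=> hv hw; rewrite /touch => /orP[/eqP->|h1] /orP[/eqP h2|h2] //.
- by move: h2; rewrite (negbTE (major_notL _ hv)).
- by subst x; move: h1; rewrite (negbTE (major_notL _ hw)).
- exact: L_uniq h1 h2.
Qed.

Lemma cLfD x fr v : #|L v :&: fr| <= (#|L v :&: (fr :\ x)|).+1.
Proof.
rewrite (cardsD1 x (L v :&: fr)); have -> : (L v :&: fr) :\ x = L v :&: (fr :\ x).
  by apply/setP => y; rewrite !inE; case: (y == x); rewrite ?andbF.
by case: (x \in _).
Qed.

Lemma cLfD_nt x fr v : x \notin L v -> #|L v :&: (fr :\ x)| = #|L v :&: fr|.
Proof.
move=> hx; suff -> : L v :&: (fr :\ x) = L v :&: fr by [].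
apply/setP => y; rewrite !inE.
case: (y =P x) => //= ->; by move: hx; rewrite /L inE => /negbTE ->.
Qed.

Lemma cLfD_in x fr v : x \in L v :&: fr -> #|L v :&: fr| = (#|L v :&: (fr :\ x)|).+1.
Proof.
move=> hx; rewrite (cardsD1 x (L v :&: fr)) hx.
suff -> : (L v :&: fr) :\ x = L v :&: (fr :\ x) by [].
by apply/setP => y; rewrite !inE; case: (y == x); rewrite ?andbF.
Qed.

Lemma cLbU y (B : {set T}) v : y \in L v -> y \notin B -> #|L v :&: (y |: B)| = (#|L v :&: B|).+1.
Proof.
move=> hy hyB; rewrite (cardsD1 y (L v :&: (y |: B))).
have -> : y \in L v :&: (y |: B) by rewrite in_setI hy setU11.
rewrite add1n; suff -> : (L v :&: (y |: B)) :\ y = L v :&: B by [].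
apply/setP => z; rewrite in_setD1 !in_setI in_setU1.
case: (z =P y) => [->|] /=; first by rewrite (negbTE hyB) andbF.
by [].
Qed.

Lemma cLb_mono y (B : {set T}) v : #|L v :&: B| <= #|L v :&: (y |: B)|.
Proof. by apply: subset_leq_card; apply: setIS; apply: subsetUr. Qed.

Lemma Ff_pres fr x v : Ff fr v -> ~~ touch x v -> Ff (fr :\ x) v.
Proof.
rewrite /Ff /touch negb_or => /and3P[hm hv hc] /andP[hxv hxL].
by rewrite hm !inE eq_sym hxv hv cLfD_nt.
Qed.


Lemma nonres_twin (M B : {set T}) v a b : dj M B -> a != b -> a \in L v :&: B -> b \in L v :&: B ->
  ~~ resolving_k e k M.
Proof.
move=> hdj hab; rewrite !in_setI => /andP[ha haB] /andP[hb hbB].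
rewrite /resolving_k negb_forall; apply/existsP; exists a.
rewrite negb_forall; apply/existsP; exists b; rewrite negb_imply hab /= negb_exists.
apply/forallP => z; apply/negP => /andP[hz]; apply/negP; rewrite negbK.
have hzB := hdj z hz.
have hza : z != a by apply/eqP => ?; subst z; rewrite haB in hzB.
have hzb : z != b by apply/eqP => ?; subst z; rewrite hbB in hzB.
move: ha hb; rewrite /L !inE => /andP[hla hva] /andP[hlb hvb].
by rewrite /dist_k (twin_dist Hsym hla hlb hva hvb hza hzb).
Qed.

Lemma dk1_far a v z : leaf e a -> e v a -> z != a -> z != v -> dist_k e 1 a z = 2.
Proof.
move=> hl hv hza hzv.
have : ~~ (dist e a z <= 1).
  rewrite dist_le; last lia.
  by rewrite reach1 !inE negb_or hza /= (leaf_nbr Hsym hl hv) hzv.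
rewrite /dist_k; lia.
Qed.

Lemma nonres_DD (M B : {set T}) v1 v2 a1 a2 : dj M B -> v1 != v2 -> v1 \in B -> v2 \in B ->
  a1 \in L v1 :&: B -> a2 \in L v2 :&: B -> ~~ resolving_k e 1 M.
Proof.
move=> hdj h12 hv1 hv2; rewrite !in_setI => /andP[ha1 ha1B] /andP[ha2 ha2B].
have ha12 : a1 != a2 by apply/eqP => ?; subst a2; rewrite (L_uniq ha1 ha2) eqxx in h12.
rewrite /resolving_k negb_forall; apply/existsP; exists a1.
rewrite negb_forall; apply/existsP; exists a2; rewrite negb_imply ha12 /= negb_exists.
apply/forallP => z; apply/negP => /andP[hz]; apply/negP; rewrite negbK.
have hzB := hdj z hz.
have hne : forall w, w \in B -> z != w by move=> w hw; apply/eqP => ?; subst w; rewrite hw in hzB.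
move: ha1 ha2; rewrite /L !inE => /andP[hl1 hva1] /andP[hl2 hva2].
by rewrite (dk1_far hl1 hva1) ?hne // (dk1_far hl2 hva2) ?hne.
Qed.

End Brk.


Section BrkInv.
Variables (T : finType) (e : rel T) (k : nat).
Hypothesis Hsym : symmetric e.
Hypothesis Hirr : irreflexive e.
Hypothesis hT : 2 < #|T|.

Notation L := (L e).
Notation Ff := (Ff e).
Notation touch := (touch e).

Definition Wc (B : {set T}) := exists v, 1 < #|L v :&: B|.
Definition DDc (B : {set T}) := k = 1 /\ exists v1 v2,
  [/\ v1 != v2, v1 \in B, v2 \in B, 0 < #|L v1 :&: B| & 0 < #|L v2 :&: B|].

Definition Mc (fr B : {set T}) :=
  (exists v, 0 < #|L v :&: B| /\ 1 < #|L v :&: fr|) \/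
  (exists v, 3 < #|L v :&: fr|) \/
  (exists v1 v2, [/\ v1 != v2, 2 < #|L v1 :&: fr| & 2 < #|L v2 :&: fr|]) \/
  (k = 1 /\ exists v1 v2 v3 v4, uniq [:: v1; v2; v3; v4] /\ Ff fr v1 /\ Ff fr v2 /\ Ff fr v3 /\ Ff fr v4) \/
  (k = 1 /\ exists v1 v2 v3, uniq [:: v1; v2; v3] /\ major e v1 /\ v1 \in fr /\
       0 < #|L v1 :&: B| /\ 0 < #|L v1 :&: fr| /\ Ff fr v2 /\ Ff fr v3) \/
  (k = 1 /\ exists v1 v2 v3, uniq [:: v1; v2; v3] /\ v1 \in B /\ 0 < #|L v1 :&: B| /\ Ff fr v2 /\ Ff fr v3) \/
  (k = 1 /\ exists v1 v2, v1 != v2 /\ v1 \in B /\ 0 < #|L v1 :&: B| /\ major e v2 /\ v2 \in fr /\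
       0 < #|L v2 :&: B| /\ 0 < #|L v2 :&: fr|) \/
  (k = 1 /\ exists w v1 v2, uniq [:: w; v1; v2] /\ major e w /\ w \in fr /\ 2 < #|L w :&: fr| /\
       Ff fr v1 /\ Ff fr v2).

Definition Bc (fr B : {set T}) :=
  (exists v, 0 < #|L v :&: B| /\ 0 < #|L v :&: fr|) \/
  (exists v, 2 < #|L v :&: fr|) \/
  (k = 1 /\ exists v1 v2 v3, uniq [:: v1; v2; v3] /\ Ff fr v1 /\ Ff fr v2 /\ Ff fr v3) \/
  (k = 1 /\ exists v1 v2 v3, uniq [:: v1; v2; v3] /\ major e v1 /\ v1 \in fr /\
       0 < #|L v1 :&: B| /\ Ff fr v2 /\ Ff fr v3) \/
  (k = 1 /\ exists v1 v2, v1 != v2 /\ v1 \in B /\ 0 < #|L v1 :&: B| /\ Ff fr v2) \/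
  (k = 1 /\ exists v1 v2, v1 != v2 /\ v1 \in B /\ 0 < #|L v1 :&: B| /\ major e v2 /\ v2 \in fr /\
       0 < #|L v2 :&: B|).

Lemma Ff_major fr v : Ff fr v -> major e v.
Proof. by case/and3P. Qed.

Lemma Ff_in fr v : Ff fr v -> v \in fr.
Proof. by case/and3P. Qed.

Lemma Ff_card fr v : Ff fr v -> 1 < #|L v :&: fr|.
Proof. by case/and3P. Qed.

Lemma untouch x v w : major e v -> major e w -> v != w -> touch x v -> ~~ touch x w.
Proof. move=> hv hw hvw ht; apply/negP => ht'; by rewrite (touch_uniq Hsym hv hw ht ht') ?eqxx in hvw. Qed.

Lemma touchL x v : x \in L v -> touch x v.
Proof. by move=> h; rewrite /touch h orbT. Qed.

Lemma notin_major x v w : x \in L v -> major e w -> x != w.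
Proof. move=> hx hw; apply/eqP => ?; subst x; by rewrite (negbTE (major_notL _ hw)) in hx. Qed.

Lemma inD1 (fr : {set T}) x v : v \in fr -> x != v -> v \in fr :\ x.
Proof. by move=> h hx; rewrite in_setD1 eq_sym hx. Qed.

Lemma uniq3 (a b c : T) : uniq [:: a; b; c] -> [/\ a != b, a != c & b != c].
Proof. by rewrite /= !inE !negb_or => /andP[/andP[-> ->] /andP[-> _]]. Qed.

Lemma uniq3I (a b c : T) : a != b -> a != c -> b != c -> uniq [:: a; b; c].
Proof. by rewrite /= !inE !negb_or => -> -> ->. Qed.

Lemma uniq4 (a b c d : T) : uniq [:: a; b; c; d] ->
  [/\ a != b, a != c, a != d, b != c & (b != d /\ c != d)].
Proof. by rewrite /= !inE !negb_or => /andP[/and3P[-> -> ->] /andP[/andP[-> ->] /andP[-> _]]]. Qed.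

Lemma pres_of x fr v w : Ff fr v -> Ff fr w -> v != w -> touch x v -> Ff (fr :\ x) w.
Proof.
move=> fv fw hvw t; apply: Ff_pres => //.
exact: untouch (Ff_major fv) (Ff_major fw) hvw t.
Qed.

Lemma pres_nt x fr v : Ff fr v -> touch x v = false -> Ff (fr :\ x) v.
Proof. by move=> f t; apply: Ff_pres => //; rewrite t. Qed.

Lemma pick3 x fr v1 v2 v3 v4 : uniq [:: v1; v2; v3; v4] ->
  Ff fr v1 -> Ff fr v2 -> Ff fr v3 -> Ff fr v4 ->
  exists a b c, uniq [:: a; b; c] /\ Ff (fr :\ x) a /\ Ff (fr :\ x) b /\ Ff (fr :\ x) c.
Proof.
move=> hu f1 f2 f3 f4; have [n12 n13 n14 n23 [n24 n34]] := uniq4 hu.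
case t1: (touch x v1).
  exists v2, v3, v4; split; first exact: uniq3I.
  by split; [|split]; apply: pres_of t1.
case t2: (touch x v2).
  exists v1, v3, v4; split; first exact: uniq3I.
  split; first exact: pres_nt.
  by split; apply: pres_of t2.
case t3: (touch x v3).
  exists v1, v2, v4; split; first exact: uniq3I.
  split; first exact: pres_nt. split; first exact: pres_nt.
  by apply: pres_of t3.
exists v1, v2, v3; split; first exact: uniq3I.
by split; [|split]; apply: pres_nt.
Qed.

Lemma pick1 x fr v2 v3 : v2 != v3 -> Ff fr v2 -> Ff fr v3 ->
  exists2 a, (a == v2) || (a == v3) & Ff (fr :\ x) a.
Proof.
move=> n23 f2 f3; case t2: (touch x v2).
  by exists v3; [rewrite eqxx orbT | apply: pres_of t2].
by exists v2; [rewrite eqxx | apply: pres_nt].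
Qed.

Lemma stepM (fr B : {set T}) x : x \in fr -> Mc fr B -> Bc (fr :\ x) B.
Proof.
move=> hx.
case=> [h|[h|[h|[h|[h|[h|[h|h]]]]]]].
- case: h => v [h1 h2].
  left; exists v; split => //; have := cLfD e x fr v; lia.
- case: h => v h.
  right; left; exists v; have := cLfD e x fr v; lia.
- case: h => v1 [v2 [h12 h1 h2]].
  right; left; case hxv: (x \in L v1).
    exists v2; rewrite cLfD_nt //; apply/negP => hx2.
    by rewrite (L_uniq Hsym hxv hx2) eqxx in h12.
  exists v1; rewrite cLfD_nt //; by rewrite hxv.
- case: h => k1 [v1 [v2 [v3 [v4 [hu [f1 [f2 [f3 f4]]]]]]]].
  right; right; left; split => //; exact: pick3 hu f1 f2 f3 f4.
- case: h => k1 [v1 [v2 [v3 [hu [m1 [i1 [b1 [l1 [f2 f3]]]]]]]]].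
  have [n12 n13 n23] := uniq3 hu.
  case hxv: (x \in L v1).
    right; right; right; left; split => //; exists v1, v2, v3.
    split; first done. split; first done.
    split; first exact: inD1 i1 (notin_major hxv m1).
    split; first done.
    split; first exact: Ff_pres f2 (untouch m1 (Ff_major f2) n12 (touchL hxv)).
    exact: Ff_pres f3 (untouch m1 (Ff_major f3) n13 (touchL hxv)).
  left; exists v1; split => //; by rewrite cLfD_nt // hxv.
- case: h => k1 [v1 [v2 [v3 [hu [i1 [b1 [f2 f3]]]]]]].
  have [n12 n13 n23] := uniq3 hu. have [a ha fa] := pick1 x n23 f2 f3.
  right; right; right; right; left; split => //; exists v1, a.
  split; first by case/orP: ha => /eqP ->.
  by do 2 (split; first done).
- case: h => k1 [v1 [v2 [n12 [i1 [b1 [m2 [i2 [b2 l2]]]]]]]].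
  case hxv: (x \in L v2).
    right; right; right; right; right; split => //; exists v1, v2.
    do 4 (split; first done).
    split; first exact: inD1 i2 (notin_major hxv m2).
    done.
  left; exists v2; split => //; by rewrite cLfD_nt // hxv.
- case: h => k1 [w [v1 [v2 [hu [mw [iw [cw [f1 f2]]]]]]]].
  have [n1 n2 n12] := uniq3 hu.
  case hxw: (x \in L w).
    right; right; left; split => //; exists w, v1, v2; split => //.
    split.
      rewrite /Ff mw inD1 //; last exact: notin_major hxw mw.
      have := cLfD e x fr w; rewrite /=; lia.
    split; first exact: Ff_pres f1 (untouch mw (Ff_major f1) n1 (touchL hxw)).
    exact: Ff_pres f2 (untouch mw (Ff_major f2) n2 (touchL hxw)).
  right; left; exists w; by rewrite cLfD_nt // hxw.
Qed.
Lemma stepB (fr B : {set T}) : (forall y, y \in fr -> y \notin B) -> Bc fr B ->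
  exists2 y, y \in fr & (Wc (y |: B) \/ DDc (y |: B) \/ Mc (fr :\ y) (y |: B)).
Proof.
move=> hfB.
case=> [h|[h|[h|[h|[h|h]]]]].
- case: h => v [h1 h2]; case/card_gt0P: h2 => y hy; exists y; first by move: hy; rewrite in_setI => /andP[].
  left; exists v; move: hy; rewrite in_setI => /andP[hyL hyf].
  by rewrite cLbU //; exact: hfB.
- case: h => v h; have : 0 < #|L v :&: fr| by lia.
  case/card_gt0P => y hy; move: (hy); rewrite in_setI => /andP[hyL hyf]; exists y => //.
  right; right; left; exists v; rewrite cLbU //; last exact: hfB.
  split => //; move: h; rewrite (cLfD_in hy); lia.
- case: h => k1 [v1 [v2 [v3 [hu [f1 [f2 f3]]]]]].
  have [n12 n13 n23] := uniq3 hu.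
  have : 0 < #|L v1 :&: fr| by have := Ff_card f1; lia.
  case/card_gt0P => y hy; move: (hy); rewrite in_setI => /andP[hyL hyf]; exists y => //.
  right; right; right; right; right; right; left; split => //; exists v1, v2, v3.
  split; first done. split; first exact: Ff_major f1.
  split; first exact: inD1 (Ff_in f1) (notin_major hyL (Ff_major f1)).
  split; first by rewrite cLbU //; exact: hfB.
  split; first by have := Ff_card f1; rewrite (cLfD_in hy); lia.
  split; first exact: pres_of f1 f2 n12 (touchL hyL).
  exact: pres_of f1 f3 n13 (touchL hyL).
- case: h => k1 [v1 [v2 [v3 [hu [m1 [i1 [b1 [f2 f3]]]]]]]].
  have [n12 n13 n23] := uniq3 hu.
  have t1 : touch v1 v1 by rewrite /touch eqxx.
  exists v1 => //; right; right; right; right; right; right; right; left; split => //; exists v1, v2, v3.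
  split; first done. split; first by rewrite in_setU1 eqxx.
  split; first by have := cLb_mono e v1 B v1; lia.
  split; first exact: Ff_pres f2 (untouch m1 (Ff_major f2) n12 t1).
  exact: Ff_pres f3 (untouch m1 (Ff_major f3) n13 t1).
- case: h => k1 [v1 [v2 [n12 [i1 [b1 f2]]]]].
  have : 0 < #|L v2 :&: fr| by have := Ff_card f2; lia.
  case/card_gt0P => y hy; move: (hy); rewrite in_setI => /andP[hyL hyf]; exists y => //.
  right; right; right; right; right; right; right; right; left; split => //; exists v1, v2.
  split; first done. split; first by rewrite in_setU1 i1 orbT.
  split; first by have := cLb_mono e y B v1; lia.
  split; first exact: Ff_major f2.
  split; first exact: inD1 (Ff_in f2) (notin_major hyL (Ff_major f2)).
  split; first by rewrite cLbU //; exact: hfB.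
  by have := Ff_card f2; rewrite (cLfD_in hy); lia.
- case: h => k1 [v1 [v2 [n12 [i1 [b1 [m2 [i2 b2]]]]]]].
  exists v2 => //; right; left; split => //; exists v1, v2; split => //.
  + by rewrite in_setU1 i1 orbT.
  + by rewrite in_setU1 eqxx.
  + by have := cLb_mono e v2 B v1; lia.
  + by have := cLb_mono e v2 B v2; lia.
Qed.

Lemma Mc0 B : ~ Mc set0 B.
Proof.
have c0 : forall v, #|L v :&: set0| = 0 by move=> v; rewrite setI0 cards0.
have f0 : forall v, ~~ Ff set0 v by move=> v; rewrite /Ff inE andbF.
case=> [h|[h|[h|[h|[h|[h|[h|h]]]]]]].
- by case: h => v [_]; rewrite c0.
- by case: h => v; rewrite c0.
- by case: h => v1 [v2 [_]]; rewrite c0.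
- by case: h => _ [v1 [v2 [v3 [v4 [_ [h _]]]]]]; move: h; rewrite (negbTE (f0 _)).
- by case: h => _ [v1 [v2 [v3 [_ [_ [h _]]]]]]; move: h; rewrite inE.
- by case: h => _ [v1 [v2 [v3 [_ [_ [_ [h _]]]]]]]; move: h; rewrite (negbTE (f0 _)).
- by case: h => _ [v1 [v2 [_ [_ [_ [_ [h _]]]]]]]; move: h; rewrite inE.
- by case: h => _ [w [v1 [v2 [_ [_ [h _]]]]]]; move: h; rewrite inE.
Qed.

Lemma Bc0 B : ~ Bc set0 B.
Proof.
have c0 : forall v, #|L v :&: set0| = 0 by move=> v; rewrite setI0 cards0.
have f0 : forall v, ~~ Ff set0 v by move=> v; rewrite /Ff inE andbF.
case=> [h|[h|[h|[h|[h|h]]]]].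
- by case: h => v [_]; rewrite c0.
- by case: h => v; rewrite c0.
- by case: h => _ [v1 [v2 [v3 [_ [h _]]]]]; move: h; rewrite (negbTE (f0 _)).
- by case: h => _ [v1 [v2 [v3 [_ [_ [h _]]]]]]; move: h; rewrite inE.
- by case: h => _ [v1 [v2 [_ [_ [_ h]]]]]; move: h; rewrite (negbTE (f0 _)).
- by case: h => _ [v1 [v2 [_ [_ [_ [_ [h _]]]]]]]; move: h; rewrite inE.
Qed.

Lemma freeM' (M B : {set T}) x : ~: ((x |: M) :|: B) = ~: (M :|: B) :\ x.
Proof. by apply/setP => y; rewrite !inE; case: (y == x); case: (y \in M); case: (y \in B). Qed.

Lemma freeB' (M B : {set T}) x : ~: (M :|: (x |: B)) = ~: (M :|: B) :\ x.
Proof. by apply/setP => y; rewrite !inE; case: (y == x); case: (y \in M); case: (y \in B). Qed.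

Definition BInv (M B : {set T}) (t : bool) :=
  Wc B \/ DDc B \/ (if t then Mc (~: (M :|: B)) B else Bc (~: (M :|: B)) B).

Lemma WDD_mono (B : {set T}) y : Wc B \/ DDc B -> Wc (y |: B) \/ DDc (y |: B).
Proof.
case=> [[v h]|[k1 [v1 [v2 [h12 i1 i2 b1 b2]]]]].
  by left; exists v; have := cLb_mono e y B v; lia.
right; split => //; exists v1, v2; split => //.
- by rewrite in_setU1 i1 orbT.
- by rewrite in_setU1 i2 orbT.
- by have := cLb_mono e y B v1; lia.
- by have := cLb_mono e y B v2; lia.
Qed.

Lemma breaker_main n M B t : dj M B -> BInv M B t -> #|~: (M :|: B)| <= n ->
  ~~ maker_wins e k n M B t.
Proof.
apply: game_breaker.
- move=> M' B' t' hdj hI h0; rewrite /BInv h0 in hI.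
  case: hI => [[v h]|[[k1 [v1 [v2 [h12 i1 i2 b1 b2]]]]|]].
  + case/card_gt1P: h => a [b [ha hb hab]].
    exact: (nonres_twin k Hsym hdj hab ha hb).
  + subst k; case/card_gt0P: b1 => a1 ha1; case/card_gt0P: b2 => a2 ha2.
    exact: (nonres_DD Hsym hT hdj h12 i1 i2 ha1 ha2).
  + by case: t' => [/Mc0|/Bc0].
- move=> M' B' hdj hI v hv; rewrite /BInv freeM'.
  case: hI => [h|[h|h]]; [by left|by right; left|right; right].
  exact: stepM hv h.
- move=> M' B' hdj hI h0.
  case: hI => [h|[h|h]].
  + case/set0Pn: h0 => y hy; exists y => //; rewrite /BInv.
    by case: (WDD_mono y (or_introl h)) => [?|?]; [left|right; left].
  + case/set0Pn: h0 => y hy; exists y => //; rewrite /BInv.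
    by case: (WDD_mono y (or_intror h)) => [?|?]; [left|right; left].
  + have hfB : forall y, y \in ~: (M' :|: B') -> y \notin B'.
      by move=> y; rewrite !inE negb_or => /andP[].
    have [y hy hI'] := stepB hfB h; exists y => //.
    by rewrite /BInv freeB'.
Qed.

Lemma breaker_second : BInv set0 set0 false -> ~~ maker_wins_second e k.
Proof. by move=> h; apply: breaker_main => //; [move=> x; rewrite inE | rewrite free0 cardsT]. Qed.

Lemma breaker_first : BInv set0 set0 true -> ~~ maker_wins_first e k.
Proof. by move=> h; apply: breaker_main => //; [move=> x; rewrite inE | rewrite free0 cardsT]. Qed.

End BrkInv.


Section Struct.
Variables (T : finType) (e : rel T).
Hypothesis Hsym : symmetric e.
Hypothesis Hirr : irreflexive e.
Hypothesis hconn : forall x y, connect e x y.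
Hypothesis hnp : ~ is_path_graph e.
Hypothesis hno2 : forall v, deg e v != 2.

Lemma path_in (C : pred T) : (forall u z, C u -> e u z -> C z) ->
  forall p u, C u -> path e u p -> C (last u p).
Proof. move=> hC; elim=> [|z p IH] u hu //= /andP[huz hp]; exact: IH (hC _ _ hu huz) hp. Qed.

Lemma deg_pos x : 0 < deg e x.
Proof.
rewrite lt0n; apply/negP => /eqP h0.
have hn : forall y, e x y = false.
  move=> y; apply/negP => hxy; have : y \in [set w | e x w] by rewrite inE.
  by move: h0; rewrite /deg => /eqP; rewrite cards_eq0 => /eqP ->; rewrite inE.
have hall : forall y, y = x.
  move=> y; case/connectP: (hconn x y) => p hp ->.
  by case: p hp => [|z p] //= /andP[]; rewrite hn.
apply: hnp; exists [:: x]; split.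
  apply: uniq_perm => //; first exact: enum_uniq.
  by move=> y; rewrite mem_enum inE (hall y) eqxx.
by move=> y z; rewrite (hall y) (hall z) Hirr.
Qed.

Lemma leaf_or_major x : leaf e x || major e x.
Proof.
rewrite /leaf /major; have := deg_pos x; have := hno2 x; lia.
Qed.

Lemma par_major a v : leaf e a -> e v a -> major e v.
Proof.
move=> ha hva; case/orP: (leaf_or_major v) => // hv; exfalso.
have hav : e a v by rewrite Hsym.
have hC : forall u z, (u == a) || (u == v) -> e u z -> (z == a) || (z == v).
  move=> u z /orP[/eqP->|/eqP->] h.
    by rewrite (leaf_nbr Hsym ha hva) in h; rewrite h orbT.
  by rewrite (leaf_nbr Hsym hv hav) in h; rewrite h.
have hall : forall y, (y == a) || (y == v).
  move=> y; case/connectP: (hconn a y) => p hp ->.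
  by apply: (path_in hC) hp; rewrite eqxx.
have hneq : a != v by apply/eqP => h; rewrite h Hirr in hav.
apply: hnp; exists [:: a; v]; split.
  apply: uniq_perm => //=; first by rewrite inE hneq.
    exact: enum_uniq.
  by move=> y; rewrite mem_enum !inE hall.
move=> x y /=; rewrite !inE !xpair_eqE.
case/orP: (hall x) => /eqP ->; case/orP: (hall y) => /eqP ->;
  rewrite ?eqxx ?Hirr ?hav ?hva ?(negbTE hneq) ?(negbTE (negbT (esym _))) //=.
by rewrite eq_sym (negbTE hneq).
by rewrite eq_sym (negbTE hneq).
Qed.

Lemma major_card v : major e v -> 2 < #|T|.
Proof. rewrite /major /deg => h; have := subset_leq_card (subsetT [set w | e v w]); rewrite cardsT; lia. Qed.

Lemma leaf_par l : leaf e l -> exists p, e p l.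
Proof.
rewrite /leaf /deg => /cards1P [u hu]; exists u.
have : u \in [set w | e l w] by rewrite hu inE.
by rewrite inE Hsym.
Qed.

Lemma ter_L v : major e v -> ter e v = #|L e v|.
Proof.
move=> hv; have hT := major_card hv.
rewrite /ter; suff -> : [set l | terminal_of e l v] = L e v by [].
apply/setP => l; rewrite /L !inE /terminal_of hv /=.
case hl: (leaf e l) => //=.
apply/forallP/idP => [h|hvl w].
  have [p hp] := leaf_par hl.
  case: (p =P v) => [<-//|/eqP hpv].
  have mp := par_major hl hp.
  have := h p; rewrite mp hpv /= => hlt.
  have : dist e l p <= 1 by rewrite dist_le; [rewrite reach1 !inE Hsym hp orbT | lia].
  move=> hp1; have : dist e l v <= 0 by lia.
  rewrite dist_le; last lia.
  rewrite /= inE => /eqP hvl; by rewrite hvl leaf_major in hv.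
apply/implyP => /andP[mw hwv].
have h1 : dist e l v <= 1 by rewrite dist_le; [rewrite reach1 !inE Hsym hvl orbT | lia].
have h2 : ~~ (dist e l w <= 1).
  rewrite dist_le; last lia.
  rewrite reach1 !inE negb_or (leaf_nbr Hsym hl hvl) hwv andbT.
  by apply/eqP => hwl; rewrite hwl leaf_major in mw.
lia.
Qed.

Lemma Mset_eq i : 0 < i < 4 -> Mset e i = [set v | major e v && (#|L e v| == i)].
Proof.
move=> hi; apply/setP => v; rewrite !inE /exterior_major.
case hv: (major e v) => //=; rewrite ter_L //.
have -> : (i == 4) = false by apply/eqP; lia.
case: eqP => [->|]; rewrite ?andbT ?andbF //; lia.
Qed.

Lemma Mset4_eq : Mset e 4 = [set v | major e v && (4 <= #|L e v|)].
Proof.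
apply/setP => v; rewrite !inE /exterior_major.
case hv: (major e v) => //=; rewrite ter_L //=.
case: (leqP 4 #|L e v|) => h; rewrite ?andbT ?andbF //; lia.
Qed.

End Struct.


Section Inv.
Variables (T : finType) (e : rel T).
Hypothesis Hsym : symmetric e.
Hypothesis Hirr : irreflexive e.
Hypothesis Hlm : forall x, leaf e x || major e x.
Hypothesis Hpar : forall a v, leaf e a -> e v a -> major e v.
Hypothesis hL1 : forall v, major e v -> 0 < #|L e v|.

Definition lf v i := nth v (enum (L e v)) i.

Lemma lf_in v i : i < #|L e v| -> lf v i \in L e v.
Proof. by move=> h; rewrite /lf -mem_enum; apply: mem_nth; rewrite -cardE. Qed.

Lemma lf_neq v i j : i < #|L e v| -> j < #|L e v| -> i != j -> lf v i != lf v j.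
Proof. by move=> hi hj hij; rewrite /lf nth_uniq ?enum_uniq // -cardE. Qed.

Lemma lf_ex v a : a \in L e v -> exists2 i, i < #|L e v| & a = lf v i.
Proof.
move=> ha; exists (index a (enum (L e v))); first by rewrite cardE index_mem mem_enum.
by rewrite /lf nth_index // mem_enum.
Qed.

Lemma inL a v : a \in L e v = leaf e a && e v a.
Proof. by rewrite /L inE. Qed.

Definition par a := odflt a [pick p | e p a].

Lemma par_L a v : a \in L e v -> par a = v.
Proof.
rewrite inL => /andP[ha hva]; rewrite /par; case: pickP => [p hp|hn] /=.
  exact: (leaf_uniq Hsym ha hp hva).
by move: (hn v); rewrite hva.
Qed.

Lemma L_notmajor a v : a \in L e v -> major e a = false.
Proof. by rewrite inL => /andP[ha _]; exact: leaf_major. Qed.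

Lemma L_major a v : a \in L e v -> major e v.
Proof. by rewrite inL => /andP[ha hva]; exact: Hpar ha hva. Qed.

Lemma L1_eq v a : #|L e v| = 1 -> a \in L e v -> a = lf v 0.
Proof. by move=> h1 ha; case: (lf_ex ha) => i hi ->; have -> : i = 0 by lia. Qed.

Variables (u1 u2 : T).
Definition sw x := if x == u1 then u2 else if x == u2 then u1 else x.

Definition fP x :=
  if major e x then (if #|L e x| == 1 then lf x 0 else sw x)
  else if leaf e x then
    (let p := par x in
     if #|L e p| == 1 then p else if x == lf p 0 then lf p 1
     else if x == lf p 1 then lf p 0 else x)
  else x.

Lemma fM1 v : major e v -> #|L e v| = 1 -> fP v = lf v 0.
Proof. by move=> hv h1; rewrite /fP hv h1. Qed.

Lemma fM2 v : major e v -> #|L e v| != 1 -> fP v = sw v.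
Proof. by move=> hv h1; rewrite /fP hv (negbTE h1). Qed.

Lemma fLa a p : a \in L e p -> fP a = let p := par a in
     if #|L e p| == 1 then p else if a == lf p 0 then lf p 1
     else if a == lf p 1 then lf p 0 else a.
Proof. by move=> ha; rewrite /fP (L_notmajor ha); move: ha; rewrite inL => /andP[-> _]. Qed.

Lemma fL1 a p : a \in L e p -> #|L e p| = 1 -> fP a = p.
Proof. by move=> ha h1; rewrite (fLa ha) /= (par_L ha) h1. Qed.

Lemma fL0 p : 1 < #|L e p| -> fP (lf p 0) = lf p 1.
Proof.
move=> h; have h0 : lf p 0 \in L e p by apply: lf_in; lia.
rewrite (fLa h0) /= (par_L h0) eqxx.
by have -> : (#|L e p| == 1) = false by apply/eqP; lia.
Qed.

Lemma fL1' p : 1 < #|L e p| -> fP (lf p 1) = lf p 0.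
Proof.
move=> h; have h0 : lf p 1 \in L e p by apply: lf_in; lia.
rewrite (fLa h0) /= (par_L h0) eqxx.
have -> : (#|L e p| == 1) = false by apply/eqP; lia.
by rewrite (negbTE (lf_neq (_ : 1 < _) (_ : 0 < _) _)) //; lia.
Qed.

Lemma fLo a p : a \in L e p -> 1 < #|L e p| -> a != lf p 0 -> a != lf p 1 -> fP a = a.
Proof.
move=> ha h n0 n1; rewrite (fLa ha) /= (par_L ha) (negbTE n0) (negbTE n1).
by have -> : (#|L e p| == 1) = false by apply/eqP; lia.
Qed.

Hypothesis Hu : u1 = u2 \/ [/\ major e u1, major e u2, #|L e u1| != 1 & #|L e u2| != 1].

Lemma fP_inv : involutive fP.
Proof.
move=> x; case/orP: (Hlm x) => [lx|mx]; last first.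
  case h1: (#|L e x| == 1).
    rewrite (fM1 mx (eqP h1)).
    have hy : lf x 0 \in L e x by apply: lf_in; rewrite (eqP h1).
    by rewrite (fL1 hy) //; exact/eqP.
  have fx : fP x = sw x by apply: fM2 => //; rewrite h1.
  rewrite fx; case: Hu => [h12|[m1 m2 c1 c2]].
    have hsw : forall y, sw y = y by move=> y; rewrite /sw h12; case: (y =P u2) => [->|].
    by rewrite hsw fx hsw.
  case: (x =P u1) => [hx1|n1].
    have -> : sw x = u2 by rewrite /sw hx1 eqxx.
    rewrite fM2 // /sw eqxx; case: (u2 =P u1) => [->|_] //; by rewrite hx1.
  case: (x =P u2) => [hx2|n2].
    have -> : sw x = u1 by rewrite /sw hx2 eqxx; case: (u2 =P u1) => // h; rewrite -hx2 h in n1.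
    by rewrite fM2 // /sw eqxx.
  have hs : sw x = x by rewrite /sw (introF eqP n1) (introF eqP n2).
  by rewrite hs -{2}hs -fx.
have [p hp] : exists p, e p x.
  move: lx; rewrite /leaf /deg => /cards1P [u hu]; exists u.
  have : u \in [set w | e x w] by rewrite hu inE.
  by rewrite inE Hsym.
have hx : x \in L e p by rewrite inL lx hp.
case h1: (#|L e p| == 1).
  rewrite (fL1 hx); last exact/eqP.
  rewrite fM1 ?(L_major hx) //; last exact/eqP.
  by rewrite -(L1_eq (eqP h1) hx).
have h0 : 0 < #|L e p| by apply/card_gt0P; exists x.
have h2 : 1 < #|L e p| by move/eqP: h1; lia.
case: (x =P lf p 0) => [->|n0]; first by rewrite fL0 // fL1'.
case: (x =P lf p 1) => [->|n1]; first by rewrite fL1' // fL0.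
by rewrite !(fLo hx) //; apply/eqP.
Qed.

Definition TS (S : {set T}) := forall x, fP x != x -> (x \in S) || (fP x \in S).

Lemma lf_notmaj v i : i < #|L e v| -> major e v -> lf v i != v.
Proof. move=> hi hv; apply/eqP => h; have := L_notmajor (lf_in hi); by rewrite h hv. Qed.

Lemma TS_rep S : TS S -> forall v, major e v -> v \in S \/ exists2 a, a \in S & leaf e a && e v a.
Proof.
move=> hS v hv; have h0 := hL1 hv.
case h1: (#|L e v| == 1).
  have := hS v; rewrite (fM1 hv (eqP h1)) (lf_notmaj h0 hv) => /(_ isT) /orP[->|h]; first by left.
  by right; exists (lf v 0) => //; rewrite -inL; exact: lf_in.
have h2 : 1 < #|L e v| by move/eqP: h1; lia.
have := hS (lf v 0); rewrite (fL0 h2) eq_sym lf_neq //; try lia.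
move=> /(_ isT) /orP[h|h]; right.
  by exists (lf v 0) => //; rewrite -inL; apply: lf_in; lia.
by exists (lf v 1) => //; rewrite -inL; apply: lf_in; lia.
Qed.

Lemma TS_01 S v : TS S -> 1 < #|L e v| -> (lf v 0 \in S) || (lf v 1 \in S).
Proof. by move=> hS h2; have := hS (lf v 0); rewrite (fL0 h2) eq_sym lf_neq //; try lia; move=> /(_ isT). Qed.

Lemma TS_twin S : TS S -> (forall v, major e v -> #|L e v| <= 3) ->
  (forall v, major e v -> #|L e v| = 3 -> lf v 2 \in S) ->
  forall v a b, leaf e a -> leaf e b -> e v a -> e v b -> a \notin S -> b \notin S -> a = b.
Proof.
move=> hS h3 hl2 v a b ha hb hva hvb haS hbS.
have haL : a \in L e v by rewrite inL ha hva.
have hbL : b \in L e v by rewrite inL hb hvb.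
have hv := L_major haL; have := h3 v hv => hn.
case: (lf_ex haL) => i hi hai; case: (lf_ex hbL) => j hj hbj.
subst a b.
have P01 : 1 < #|L e v| -> (lf v 0 \in S) || (lf v 1 \in S) by exact: TS_01.
have P2 : 2 < #|L e v| -> lf v 2 \in S by move=> h; apply: hl2 => //; lia.
clear ha hb hva hvb haL hbL.
move: hi hj haS hbS P01 P2.
case: i => [|[|[|i]]]; case: j => [|[|[|j]]] => hi hj hiS hjS P01 P2 //; try lia.
Qed.

Lemma TS_badsz S a v : TS S -> leaf e a -> e v a -> a \notin S -> v \notin S -> 1 < #|L e v|.
Proof.
move=> hS ha hva haS hvS.
have haL : a \in L e v by rewrite inL ha hva.
have hv := L_major haL; have h0 := hL1 hv.
case h1: (#|L e v| == 1); last by move/eqP: h1; lia.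
have := hS v; rewrite (fM1 hv (eqP h1)) (lf_notmaj h0 hv) => /(_ isT).
by rewrite (negbTE hvS) -(L1_eq (eqP h1) haL) (negbTE haS).
Qed.

Hypothesis hT : 2 < #|T|.

Lemma maker_gen k (M0 : {set T}) : 0 < k -> (forall v, major e v -> #|L e v| <= 3) ->
  (forall v, major e v -> #|L e v| = 3 -> lf v 2 \in M0) ->
  (k = 1 -> forall S : {set T}, M0 \subset S -> (u1 != u2 -> (u1 \in S) || (u2 \in S)) ->
     forall v w, major e v -> major e w -> 1 < #|L e v| -> 1 < #|L e w| -> v \notin S -> w \notin S -> v = w) ->
  forall S : {set T}, M0 \subset S -> TS S -> resolving_k e k S.
Proof.
move=> hk h3 hM0 hbad S hS0 hS.
apply: (resolve_Q Hsym Hlm Hpar hT hk).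
- exact: TS_rep.
- apply: (TS_twin hS h3) => v hv hv3; exact: (subsetP hS0 _ (hM0 v hv hv3)).
case: (leqP 2 k) => hk2; [by left | right].
have k1 : k = 1 by lia.
move=> v w a b hvS hwS ha hva haS hb hwb hbS.
apply: (hbad k1 S hS0) => //.
- move=> n12; case: Hu => [h|[m1 m2 c1 c2]]; first by rewrite h eqxx in n12.
  have := hS u1; rewrite (fM2 m1 c1) /sw eqxx eq_sym n12 => /(_ isT).
  done.
- exact: Hpar ha hva.
- exact: Hpar hb hwb.
- exact: TS_badsz hS ha hva haS hvS.
- exact: TS_badsz hS hb hwb hbS hwS.
Qed.

End Inv.


Section Final.
Variables (T : finType) (e : rel T) (k : nat).
Hypothesis he_sym : symmetric e.
Hypothesis he_irr : irreflexive e.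
Hypothesis htree : is_tree e.
Hypothesis hnotpath : ~ is_path_graph e.
Hypothesis hno2 : forall v : T, deg e v != 2.
Hypothesis hter0 : forall v : T, major e v -> 0 < ter e v.
Hypothesis hk : 0 < k.

Lemma hconn : forall x y, connect e x y.
Proof. by case: htree. Qed.

Lemma Hlm : forall x, leaf e x || major e x.
Proof. exact: (leaf_or_major he_irr hconn hnotpath hno2). Qed.

Lemma Hpar : forall a v, leaf e a -> e v a -> major e v.
Proof. move=> a v; exact: (par_major he_sym he_irr hconn hnotpath hno2). Qed.

Lemma hL1 : forall v, major e v -> 0 < #|L e v|.
Proof. by move=> v hv; rewrite -(ter_L he_sym he_irr hconn hnotpath hno2 hv); exact: hter0. Qed.

Lemma inM i v : 0 < i < 4 -> (v \in Mset e i) = major e v && (#|L e v| == i).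
Proof. by move=> hi; rewrite (Mset_eq he_sym he_irr hconn hnotpath hno2 hi) inE. Qed.

Lemma inM4 v : (v \in Mset e 4) = major e v && (4 <= #|L e v|).
Proof. by rewrite (Mset4_eq he_sym he_irr hconn hnotpath hno2) inE. Qed.

Lemma M4_0 : Mset e 4 = set0 -> forall v, major e v -> #|L e v| <= 3.
Proof. move=> h v hv; have := inM4 v; rewrite h inE hv /=; lia. Qed.

Lemma M3_0 : Mset e 3 = set0 -> forall v, major e v -> #|L e v| != 3.
Proof. by move=> h v hv; have := @inM 3 v isT; rewrite h inE hv /= => <-. Qed.

Lemma FfT v : major e v -> 1 < #|L e v| -> Ff e setT v.
Proof. by move=> hv h; rewrite /Ff hv in_setT setIT. Qed.

Lemma O_B : ~~ maker_wins_first e k -> ~~ maker_wins_second e k -> O_Rk e k = OutB.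
Proof. by rewrite /O_Rk => /negbTE -> /negbTE ->. Qed.

Lemma O_N : maker_wins_first e k -> ~~ maker_wins_second e k -> O_Rk e k = OutN.
Proof. by rewrite /O_Rk => -> /negbTE ->. Qed.

Lemma O_M : maker_wins_first e k -> maker_wins_second e k -> O_Rk e k = OutM.
Proof. by rewrite /O_Rk => -> ->. Qed.

Lemma bB2 v : major e v -> 2 < #|L e v| -> ~~ maker_wins_second e k.
Proof.
move=> hv h; apply: (breaker_second he_sym (major_card hv)).
by rewrite /BInv free0; right; right; right; left; exists v; rewrite setIT.
Qed.

Lemma bM4 v : major e v -> 3 < #|L e v| -> ~~ maker_wins_first e k.
Proof.
move=> hv h; apply: (breaker_first he_sym (major_card hv)).
by rewrite /BInv free0; right; right; right; left; exists v; rewrite setIT.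
Qed.

Lemma bM33 v1 v2 : v1 != v2 -> major e v1 -> 2 < #|L e v1| -> 2 < #|L e v2| -> ~~ maker_wins_first e k.
Proof.
move=> h12 hv h1 h2; apply: (breaker_first he_sym (major_card hv)).
by rewrite /BInv free0; right; right; right; right; left; exists v1, v2; rewrite !setIT.
Qed.

Lemma bM8 w v1 v2 : k = 1 -> uniq [:: w; v1; v2] -> major e w -> major e v1 -> major e v2 ->
  2 < #|L e w| -> 1 < #|L e v1| -> 1 < #|L e v2| -> ~~ maker_wins_first e k.
Proof.
move=> k1 hu hw h1 h2 cw c1 c2; apply: (breaker_first he_sym (major_card hw)).
rewrite /BInv free0; do 9 right; split => //; exists w, v1, v2.
by rewrite setIT in_setT; do 4 (split => //); split; apply: FfT.
Qed.

Lemma bM4F v1 v2 v3 v4 : k = 1 -> uniq [:: v1; v2; v3; v4] -> major e v1 -> major e v2 ->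
  major e v3 -> major e v4 -> 1 < #|L e v1| -> 1 < #|L e v2| -> 1 < #|L e v3| -> 1 < #|L e v4| ->
  ~~ maker_wins_first e k.
Proof.
move=> k1 hu h1 h2 h3 h4 c1 c2 c3 c4; apply: (breaker_first he_sym (major_card h1)).
rewrite /BInv free0; do 5 right; left; split => //; exists v1, v2, v3, v4.
by split => //; do 3 (split; first exact: FfT); exact: FfT.
Qed.

Lemma bB3F v1 v2 v3 : k = 1 -> uniq [:: v1; v2; v3] -> major e v1 -> major e v2 ->
  major e v3 -> 1 < #|L e v1| -> 1 < #|L e v2| -> 1 < #|L e v3| ->
  ~~ maker_wins_second e k.
Proof.
move=> k1 hu h1 h2 h3 c1 c2 c3; apply: (breaker_second he_sym (major_card h1)).
rewrite /BInv free0; do 4 right; left; split => //; exists v1, v2, v3.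
by split => //; do 2 (split; first exact: FfT); exact: FfT.
Qed.


Lemma mk_first u1 u2 x0 (M0 : {set T}) :
  (u1 = u2 \/ [/\ major e u1, major e u2, #|L e u1| != 1 & #|L e u2| != 1]) ->
  2 < #|T| -> M0 \subset [set x0] ->
  (forall v, major e v -> #|L e v| <= 3) ->
  (forall v, major e v -> #|L e v| = 3 -> lf e v 2 \in M0) ->
  (k = 1 -> forall S : {set T}, M0 \subset S -> (u1 != u2 -> (u1 \in S) || (u2 \in S)) ->
     forall v w, major e v -> major e w -> 1 < #|L e v| -> 1 < #|L e w| -> v \notin S -> w \notin S -> v = w) ->
  maker_wins_first e k.
Proof.
move=> Hu hT hsub h3 hM0 hbad.
apply: (pairing_first (fP_inv he_sym Hlm Hpar Hu) _ hsub).
move=> S hS hTS; exact: (maker_gen he_sym Hlm Hpar hL1 Hu hT hk h3 hM0 hbad hS hTS).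
Qed.

Lemma mk_second u1 u2 :
  (u1 = u2 \/ [/\ major e u1, major e u2, #|L e u1| != 1 & #|L e u2| != 1]) ->
  2 < #|T| ->
  (forall v, major e v -> #|L e v| <= 2) ->
  (k = 1 -> forall S : {set T}, (u1 != u2 -> (u1 \in S) || (u2 \in S)) ->
     forall v w, major e v -> major e w -> 1 < #|L e v| -> 1 < #|L e w| -> v \notin S -> w \notin S -> v = w) ->
  maker_wins_second e k.
Proof.
move=> Hu hT h2 hbad.
apply: (@pairing_second _ e k _ set0 (fP_inv he_sym Hlm Hpar Hu) _ erefl).
move=> S hS hTS; apply: (maker_gen he_sym Hlm Hpar hL1 Hu hT hk _ _ _ hS hTS).
- by move=> v hv; have := h2 v hv; lia.
- by move=> v hv h; have := h2 v hv; lia.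
- by move=> k1 S' _; exact: hbad.
Qed.

Lemma four_of (A : {set T}) : 3 < #|A| ->
  exists a b c d, [/\ uniq [:: a; b; c; d], a \in A, b \in A, c \in A & d \in A].
Proof.
move=> h; have : 0 < #|A| by lia.
case/card_gt0P => a ha.
have : 0 < #|A :\ a| by move: h; rewrite (cardsD1 a A) ha; lia.
case/card_gt0P => b hb.
have : 1 < #|A :\ a :\ b|.
  move: h; rewrite (cardsD1 a A) ha (cardsD1 b (A :\ a)) hb; lia.
case/card_gt1P => c [d [hc hd hcd]].
move: hb hc hd; rewrite !inE => /andP[nba hb] /and3P[ncb nca hc] /and3P[ndb nda hd].
exists a, b, c, d; split => //.
by rewrite /= !inE !negb_or !(eq_sym a) nba nca nda !(eq_sym b) ncb ndb hcd.
Qed.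

Lemma three_eq (A : {set T}) : #|A| = 3 ->
  exists a b c, uniq [:: a; b; c] /\ forall v, (v \in A) = [|| v == a, v == b | v == c].
Proof.
move=> h; have : 0 < #|A| by lia.
case/card_gt0P => a ha.
have : #|A :\ a| == 2 by move: h; rewrite (cardsD1 a A) ha; lia.
case/cards2P => b [c [hbc hA]].
have hb : b \in A :\ a by rewrite hA !inE eqxx.
have hc : c \in A :\ a by rewrite hA !inE eqxx orbT.
move: (hb) (hc); rewrite !inE => /andP[nba _] /andP[nca _].
exists a, b, c; split.
  by rewrite /= !inE !negb_or !(eq_sym a) nba nca hbc.
move=> v; case: (v =P a) => [->|/eqP nva] /=; first by rewrite ha.
have <- : (v \in A :\ a) = (v \in A) by rewrite in_setD1 nva.
by rewrite hA !inE.
Qed.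

Lemma part1 :
  (1 <= #|Mset e 4| \/ 2 <= #|Mset e 3|
    \/ (Mset e 4 = set0 /\ #|Mset e 3| = 1 /\ 2 <= #|Mset e 2| /\ k = 1)
    \/ (Mset e 4 = set0 /\ Mset e 3 = set0 /\ 4 <= #|Mset e 2| /\ k = 1))
     -> O_Rk e k = OutB.
Proof.
case=> [h4|[h3|[[h4 [h3 [h2 k1]]]|[h4 [h3 [h2 k1]]]]]].
- case/card_gt0P: h4 => v; rewrite inM4 => /andP[hv hc].
  by apply: O_B; [apply: (bM4 hv) | apply: (bB2 hv)]; lia.
- case/card_gt1P: h3 => v1 [v2 [i1 i2 n12]].
  move: i1 i2; rewrite !inM // => /andP[m1 /eqP c1] /andP[m2 /eqP c2].
  by apply: O_B; [apply: (bM33 n12 m1) | apply: (bB2 m1)]; lia.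
- move/eqP: h3; case/cards1P => w hw.
  have : w \in Mset e 3 by rewrite hw inE.
  rewrite inM // => /andP[mw /eqP cw].
  case/card_gt1P: h2 => v1 [v2 [i1 i2 n12]].
  move: i1 i2; rewrite !inM // => /andP[m1 /eqP c1] /andP[m2 /eqP c2].
  have hu : uniq [:: w; v1; v2].
    rewrite /= !inE !negb_or n12 !andbT.
    by apply/andP; split; apply/eqP => h; [rewrite -h cw in c1 | rewrite -h cw in c2].
  by apply: O_B; [apply: (bM8 k1 hu mw m1 m2) | apply: (bB2 mw)]; lia.
- have [a [b [c [d [hu ia ib ic id]]]]] := four_of h2.
  move: ia ib ic id; rewrite !inM // => /andP[ma /eqP ca] /andP[mb /eqP cb] /andP[mc /eqP cc] /andP[md /eqP cd].
  apply: O_B; first by apply: (bM4F k1 hu ma mb mc md); lia.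
  apply: (bB3F k1 _ ma mb mc); try lia.
  by move: hu; rewrite /= !inE !negb_or => /andP[/and3P[-> -> _] /andP[/andP[-> _] _]].
Qed.


Lemma cls v : Mset e 4 = set0 -> major e v -> 1 < #|L e v| ->
  (v \in Mset e 2) || (v \in Mset e 3).
Proof.
move=> h4 mv cv; have := M4_0 h4 mv; rewrite !inM // mv /=.
case: (#|L e v| =P 2) => [->//|n2] h; apply/eqP; lia.
Qed.

Lemma part2 :
  ((Mset e 4 = set0 /\ #|Mset e 3| = 1 /\ #|Mset e 2| <= 1 /\ k = 1)
    \/ (Mset e 4 = set0 /\ #|Mset e 3| = 1 /\ 2 <= k)
    \/ (Mset e 4 = set0 /\ Mset e 3 = set0 /\ #|Mset e 2| = 3 /\ k = 1))
     -> O_Rk e k = OutN.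
Proof.
case=> [[h4 [h3 [h2 k1]]]|[[h4 [h3 hk2]]|[h4 [h3 [h2 k1]]]]].
- move/eqP: h3; case/cards1P => w hw.
  have : w \in Mset e 3 by rewrite hw inE.
  rewrite inM // => /andP[mw /eqP cw].
  have hT := major_card mw.
  apply: O_N; last by apply: (bB2 mw); lia.
  have hlf : forall v, major e v -> #|L e v| = 3 -> lf e v 2 \in [set lf e w 2].
    move=> v mv c3; have : v \in Mset e 3 by rewrite inM // mv c3.
    by rewrite hw inE => /eqP ->; rewrite inE.
  have hsub : [set lf e w 2] \subset [set lf e w 2] by [].
  case: (leqP #|Mset e 2| 0) => h0.
    have M2e : Mset e 2 = set0 by apply: cards0_eq; lia.
    have vw : forall v, major e v -> 1 < #|L e v| -> v = w.
      move=> v mv cv; case/orP: (cls h4 mv cv); first by rewrite M2e inE.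
      by rewrite hw inE => /eqP.
    apply: (mk_first (u1 := w) (u2 := w) (or_introl erefl) hT hsub (M4_0 h4) hlf).
    by move=> _ S _ _ v w' mv mw' cv cw' _ _; rewrite (vw v mv cv) (vw w' mw' cw').
  have : #|Mset e 2| == 1 by apply/eqP; lia.
  case/cards1P => u hu.
  have : u \in Mset e 2 by rewrite hu inE.
  rewrite inM // => /andP[mu /eqP cu].
  have hwu : w != u by apply/eqP => h; rewrite h cu in cw.
  have vwu : forall v, major e v -> 1 < #|L e v| -> (v == w) || (v == u).
    move=> v mv cv; case/orP: (cls h4 mv cv); first by rewrite hu inE => ->; rewrite orbT.
    by rewrite hw inE => ->.
  apply: (mk_first (u1 := w) (u2 := u) _ hT hsub (M4_0 h4) hlf).
    by right; split => //; rewrite ?cw ?cu.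
  move=> _ S _ hsw v w' mv mw' cv cw' hvS hwS; move: (hsw hwu).
  case/orP: (vwu v mv cv) => /eqP hv; case/orP: (vwu w' mw' cw') => /eqP hw'; subst v w' => //.
  + by move: hvS hwS => /negbTE -> /negbTE ->.
  + by move: hvS hwS => /negbTE -> /negbTE ->.
- move/eqP: h3; case/cards1P => w hw.
  have : w \in Mset e 3 by rewrite hw inE.
  rewrite inM // => /andP[mw /eqP cw].
  have hT := major_card mw.
  apply: O_N; last by apply: (bB2 mw); lia.
  have hlf : forall v, major e v -> #|L e v| = 3 -> lf e v 2 \in [set lf e w 2].
    move=> v mv c3; have : v \in Mset e 3 by rewrite inM // mv c3.
    by rewrite hw inE => /eqP ->; rewrite inE.
  apply: (mk_first (u1 := w) (u2 := w) (or_introl erefl) hT (subxx _) (M4_0 h4) hlf).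
  move=> k1; lia.
- have [a [b [c [hu hA]]]] := three_eq h2.
  have := hA a; rewrite eqxx inM // => /andP[ma /eqP ca].
  have := hA b; rewrite eqxx orbT inM // => /andP[mb /eqP cb].
  have := hA c; rewrite eqxx !orbT inM // => /andP[mc /eqP cc].
  have hT := major_card ma.
  have [nab nac nbc] := uniq3 hu.
  apply: O_N; last by apply: (bB3F k1 hu ma mb mc); lia.
  apply: (mk_first (u1 := b) (u2 := c) (x0 := a) (M0 := [set a]) _ hT (subxx _) (M4_0 h4)).
  + by right; split => //; rewrite ?cb ?cc.
  + by move=> v mv c3; have := M3_0 h3 mv; rewrite c3.
  move=> _ S hS hsw v w' mv mw' cv cw' hvS hwS.
  have haS : a \in S by apply: (subsetP hS); rewrite inE.
  have vin : forall v, major e v -> 1 < #|L e v| -> v \notin S -> (v == b) || (v == c).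
    move=> x mx cx hxS; case/orP: (cls h4 mx cx); last by rewrite h3 inE.
    rewrite hA => /or3P[/eqP hx|->|->] //; last by rewrite orbT.
    by rewrite hx haS in hxS.
  move: (hsw nbc).
  case/orP: (vin v mv cv hvS) => /eqP hv; case/orP: (vin w' mw' cw' hwS) => /eqP hw'; subst v w' => //.
  + by move: hvS hwS => /negbTE -> /negbTE ->.
  + by move: hvS hwS => /negbTE -> /negbTE ->.
Qed.


Lemma part3 :
  ((Mset e 4 = set0 /\ Mset e 3 = set0 /\ #|Mset e 2| = 2 /\ k = 1)
    \/ (Mset e 4 = set0 /\ Mset e 3 = set0 /\ Mset e 2 != set0 /\ 2 <= k))
     -> O_Rk e k = OutM.
Proof.
have le2 : Mset e 4 = set0 -> Mset e 3 = set0 -> forall v, major e v -> #|L e v| <= 2.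
  move=> h4 h3 v mv; have := M4_0 h4 mv; have := M3_0 h3 mv; move=> /eqP; lia.
have nl3 : Mset e 4 = set0 -> Mset e 3 = set0 ->
   forall v, major e v -> #|L e v| = 3 -> lf e v 2 \in (set0 : {set T}).
  by move=> h4 h3 v mv c3; have := le2 h4 h3 v mv; lia.
case=> [[h4 [h3 [h2 k1]]]|[h4 [h3 [h2 hk2]]]].
- move/eqP: h2; case/cards2P => a [b [nab hA]].
  have : a \in Mset e 2 by rewrite hA !inE eqxx.
  rewrite inM // => /andP[ma /eqP ca].
  have : b \in Mset e 2 by rewrite hA !inE eqxx orbT.
  rewrite inM // => /andP[mb /eqP cb].
  have hT := major_card ma.
  have Hu : a = b \/ [/\ major e a, major e b, #|L e a| != 1 & #|L e b| != 1].
    by right; split => //; rewrite ?ca ?cb.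
  have vin : forall v, major e v -> 1 < #|L e v| -> (v == a) || (v == b).
    move=> x mx cx; case/orP: (cls h4 mx cx); last by rewrite h3 inE.
    by rewrite hA !inE.
  have hb : forall S : {set T}, (a != b -> (a \in S) || (b \in S)) ->
     forall v w, major e v -> major e w -> 1 < #|L e v| -> 1 < #|L e w| -> v \notin S -> w \notin S -> v = w.
    move=> S hsw v w mv mw cv cw hvS hwS; move: (hsw nab).
    case/orP: (vin v mv cv) => /eqP hv; case/orP: (vin w mw cw) => /eqP hw; subst v w => //.
    + by move: hvS hwS => /negbTE -> /negbTE ->.
    + by move: hvS hwS => /negbTE -> /negbTE ->.
  apply: O_M.
    apply: (mk_first (x0 := a) Hu hT (sub0set _) (M4_0 h4) (nl3 h4 h3)).
    by move=> _ S _; exact: hb.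
  apply: (mk_second Hu hT (le2 h4 h3)).
  by move=> _; exact: hb.
- case/set0Pn: h2 => a; rewrite inM // => /andP[ma /eqP ca].
  have hT := major_card ma.
  apply: O_M.
    apply: (mk_first (u1 := a) (u2 := a) (x0 := a) (or_introl erefl) hT (sub0set _) (M4_0 h4) (nl3 h4 h3)).
    move=> k1; lia.
  apply: (mk_second (u1 := a) (u2 := a) (or_introl erefl) hT (le2 h4 h3)).
  move=> k1; lia.
Qed.

End Final.


Theorem theorem3p9 (T : finType) (e : rel T) (k : nat)
  (he_sym : symmetric e) (he_irr : irreflexive e)
  (htree : is_tree e) (hnotpath : ~ is_path_graph e)
  (hno2 : forall v : T, deg e v != 2)
  (hter0 : forall v : T, major e v -> 0 < ter e v)
  (hk : 0 < k) :
  ((1 <= #|Mset e 4| \/ 2 <= #|Mset e 3|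
    \/ (Mset e 4 = set0 /\ #|Mset e 3| = 1 /\ 2 <= #|Mset e 2| /\ k = 1)
    \/ (Mset e 4 = set0 /\ Mset e 3 = set0 /\ 4 <= #|Mset e 2| /\ k = 1))
     -> O_Rk e k = OutB)
  /\
  (((Mset e 4 = set0 /\ #|Mset e 3| = 1 /\ #|Mset e 2| <= 1 /\ k = 1)
    \/ (Mset e 4 = set0 /\ #|Mset e 3| = 1 /\ 2 <= k)
    \/ (Mset e 4 = set0 /\ Mset e 3 = set0 /\ #|Mset e 2| = 3 /\ k = 1))
     -> O_Rk e k = OutN)
  /\
  (((Mset e 4 = set0 /\ Mset e 3 = set0 /\ #|Mset e 2| = 2 /\ k = 1)
    \/ (Mset e 4 = set0 /\ Mset e 3 = set0 /\ Mset e 2 != set0 /\ 2 <= k))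
     -> O_Rk e k = OutM).
Proof.
split; first exact: (part1 he_sym he_irr htree hnotpath hno2 hk).
split; first exact: (part2 he_sym he_irr htree hnotpath hno2 hter0 hk).
exact: (part3 he_sym he_irr htree hnotpath hno2 hter0 hk).
Qed.
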